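(* Fix a sequence of matchings and any non-negative load vector at the end of round $t_1$, and let $\mathcal{B}$ be an arbitrary subset of the tokens. Then for any subset of nodes $D \subseteq V$ and any round $t_2 > t_1$, \[ \Pr\Big[ \bigwedge_{i \in \mathcal{B}} \big(w_i^{(t_2)} \in D\big) \Big] \leq \prod_{i\in\mathcal{B}}\mathbf{M}_{w_i^{(t_1)},D}^{[t_1+1,t_2]} = \prod_{i \in \mathcal{B}} \Pr\big[ w_i^{(t_2)} \in D \big]. \]
   Context: $G=(V,E)$ has $n$ nodes; a matching $\mathbf{M}^{(t)}\subseteq E$ is identified with the symmetric matrix with entries $1/2$ on $(u,u),(v,v),(u,v),(v,u)$ for $\{u,v\}\in\mathbf{M}^{(t)}$, $1$ on the diagonal for unmatched nodes, $0$ elsewhere; $\mathbf{M}^{[a,b]}=\prod_{s=a}^b\mathbf{M}^{(s)}$ (identity if $a>b$), and $\mathbf{M}_{u,D}=\sum_{v\in D}\mathbf{M}_{u,v}$. Token-based description of the discrete protocol: tokens are distinguishable; $w^{(t)}_i$ is the node holding token $i$ at the end of round $t$, $x^{(t)}_u$ the number of tokens at $u$. If $u,v$ are matched in round $t$, all tokens at $u$ and $v$ are put in an urn; with probability $1/2$ node $u$ draws $\lceil (x^{(t-1)}_u+x^{(t-1)}_v)/2\rceil$ tokens uniformly at random without replacement, otherwise $\lfloor (x^{(t-1)}_u+x^{(t-1)}_v)/2\rfloor$ (independently over matched edges and rounds); $v$ gets the rest. Unmatched nodes keep their tokens. *)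

(* Defs.v *)
From mathcomp Require Import all_boot all_order all_algebra.
Set Implicit Arguments. Unset Strict Implicit. Unset Printing Implicit Defensive.
Import Order.TTheory GRing.Theory Num.Theory.
Local Open Scope ring_scope.

(* Nodes are 'I_n; the graph G is a symmetric irreflexive relation on 'I_n.
   A matching is encoded by its "mate" function: mate u = v if {u,v} is a
   matched edge, mate u = u if u is unmatched. *)
Definition is_matching (n : nat) (G : rel 'I_n) (mate : {ffun 'I_n -> 'I_n}) :=
  forall u : 'I_n, mate (mate u) = u /\ (mate u != u -> G u (mate u)).

Definition is_graph (n : nat) (G : rel 'I_n) :=
  irreflexive G /\ symmetric G.

Definition match_mx (R : fieldType) (n : nat) (mate : {ffun 'I_n -> 'I_n}) : 'M[R]_n :=
  \matrix_(u, v)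
    (if mate u == u then (u == v)%:R
     else if (v == u) || (v == mate u) then 2%:R^-1 else 0).

Definition match_prod (R : fieldType) (n : nat) (Ms : nat -> {ffun 'I_n -> 'I_n})
  (a b : nat) : 'M[R]_n :=
  \big[mulmx/1%:M]_(a <= s < b.+1) match_mx R (Ms s).

Definition mx_row_set (R : fieldType) (n : nat) (A : 'M[R]_n) (u : 'I_n) (D : {set 'I_n}) : R :=
  \sum_(v in D) A u v.

(* Token configurations: w i = node holding token i. *)
Definition config (m n : nat) := {ffun 'I_m -> 'I_n}.

(* Probability that the tokens on the matched edge {u, mate u} are split as
   in w' starting from w: u receives a uniformly random subset of the urn of
   size ceil(k/2) w.p. 1/2 and of size floor(k/2) w.p. 1/2. *)
Definition edge_prob (R : realFieldType) (m n : nat) (mate : {ffun 'I_n -> 'I_n})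
  (w w' : config m n) (u : 'I_n) : R :=
  let S := [set i | (w i == u) || (w i == mate u)] in
  let k := #|S| in
  let a := #|[set i in S | w' i == u]| in
  (a == uphalf k)%:R / 2%:R / ('C(k, uphalf k))%:R
  + (a == k./2)%:R / 2%:R / ('C(k, k./2))%:R.

Definition step_prob (R : realFieldType) (m n : nat) (mate : {ffun 'I_n -> 'I_n})
  (w w' : config m n) : R :=
  if [forall i, (w' i == w i) || (w' i == mate (w i))] then
    \prod_(u : 'I_n | (u < mate u)%N) edge_prob R mate w w' u
  else 0.

(* Distribution of the configuration at the end of round t1 + k, given the
   configuration w0 at the end of round t1 (rounds independent). *)
Fixpoint proc_dist (R : realFieldType) (m n : nat) (Ms : nat -> {ffun 'I_n -> 'I_n})
  (t1 k : nat) (w0 : config m n) : {ffun config m n -> R} :=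
  match k with
  | 0 => [ffun w => (w == w0)%:R]
  | k'.+1 => [ffun w' => \sum_(w : config m n)
                 proc_dist R Ms t1 k' w0 w * step_prob R (Ms (t1 + k)%N) w w']
  end.

Definition Pr_at (R : realFieldType) (m n : nat) (Ms : nat -> {ffun 'I_n -> 'I_n})
  (t1 t2 : nat) (w0 : config m n) (E : pred (config m n)) : R :=
  \sum_(w : config m n | E w) proc_dist R Ms t1 (t2 - t1) w0 w.

(* Main.v *)
Require Import Defs.
From mathcomp Require Import all_boot all_order all_algebra.
From mathcomp Require Import ring lra zify.
Set Implicit Arguments. Unset Strict Implicit. Unset Printing Implicit Defensive.
Import Order.TTheory GRing.Theory Num.Theory.
Local Open Scope ring_scope.

Section Num.
Variable R : realFieldType.
Variables a b : R.

Definition Apol : {poly R} := 'X * a%:P + b%:P.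
Definition Cpol : {poly R} := 'X + 1.
Definition Qp (r s : nat) := Apol ^+ r * Cpol ^+ s.

Lemma coef_AM q c : (Apol * q)`_c.+1 = a * q`_c + b * q`_c.+1.
Proof.
by rewrite /Apol mulrDl -mulrA coefD coefXM /= !coefCM.
Qed.

Lemma coef_AM0 q : (Apol * q)`_0 = b * q`_0.
Proof. by rewrite /Apol mulrDl -mulrA coefD coefXM /= coefCM add0r. Qed.

Lemma coef_CM q c : (Cpol * q)`_c.+1 = q`_c + q`_c.+1.
Proof. by rewrite /Cpol mulrDl mul1r coefD coefXM. Qed.

Lemma coef_CM0 q : (Cpol * q)`_0 = q`_0.
Proof. by rewrite /Cpol mulrDl mul1r coefD coefXM add0r. Qed.

Lemma coef_Cn n c : (Cpol ^+ n)`_c = ('C(n, c))%:R.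
Proof.
elim: n c => [|n IH] c.
  by rewrite expr0 coefC; case: c.
rewrite exprS; case: c => [|c].
  by rewrite coef_CM0 IH !bin0.
by rewrite coef_CM !IH binS natrD addrC.
Qed.

Lemma deriv_id r s :
  Cpol * (Qp r s)^`() - (Qp r s) *+ (r + s) =
  (Apol ^+ r.-1 * Cpol ^+ s * (a - b)%:P) *+ r.
Proof.
rewrite /Qp derivM !deriv_exp.
have dA : Apol^`() = a%:P.
  by rewrite /Apol derivD derivC addr0 derivM derivX derivC mul1r mulr0 addr0.
have dC : Cpol^`() = 1.
  by rewrite /Cpol derivD derivX derivC addr0.
rewrite dA dC.
case: r => [|r]; case: s => [|s] /=; rewrite ?exprS ?expr0;
  try set A := Apol ^+ _; try set C := Cpol ^+ _;
  rewrite /Cpol /Apol polyCB; ring.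
Qed.


Lemma mono r s c : (r + s = c.*2.+1)%N ->
  ((Qp r s)`_c.+1 - (Qp r s)`_c) *+ c.+1 =
  ((Apol ^+ r.-1 * Cpol ^+ s)`_c * (a - b)) *+ r.
Proof.
move=> hrs.
have := congr1 (fun p : {poly R} => p`_c) (deriv_id r s) => /=.
rewrite coefB coefMn coefMn coefMC hrs => <-.
case: c hrs => [|c] hrs.
  by rewrite coef_CM0 coef_deriv /= !mulr1n.
rewrite coef_CM !coef_deriv.
have -> : (c.+1.*2.+1 = c.+1 + c.+2)%N by lia.
rewrite mulrnDr mulrnBl. lra.
Qed.

Lemma coef_mul_ge0 (p q : {poly R}) :
  (forall i, 0 <= p`_i) -> (forall i, 0 <= q`_i) -> forall i, 0 <= (p * q)`_i.
Proof.
move=> hp hq i; rewrite coefM; apply: sumr_ge0 => j _; exact: mulr_ge0.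
Qed.

Lemma coef_exp_ge0 (p : {poly R}) n :
  (forall i, 0 <= p`_i) -> forall i, 0 <= (p ^+ n)`_i.
Proof.
move=> hp; elim: n => [|n IH] i.
  by rewrite expr0 coefC; case: (i == 0)%N.
by rewrite exprS; apply: coef_mul_ge0.
Qed.

Lemma Qp_ge0 r s i : 0 <= a -> 0 <= b -> 0 <= (Qp r s)`_i.
Proof.
move=> ha hb; apply: coef_mul_ge0; apply: coef_exp_ge0 => j.
  rewrite -[Apol]mulr1; case: j => [|[|j]].
  - by rewrite coef_AM0 coefC mulr1.
  - by rewrite coef_AM !coefC /= mulr1 mulr0 addr0.
  - by rewrite coef_AM !coefC /= !mulr0 addr0.
rewrite -[Cpol]mulr1; case: j => [|[|j]].
- by rewrite coef_CM0 coefC.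
- by rewrite coef_CM !coefC /= addr0.
- by rewrite coef_CM !coefC /= addr0.
Qed.


Lemma even_bound h r : 0 <= a -> 0 <= b -> (r <= h.*2)%N ->
  ((Qp r (h.*2 - r))`_h <= ('C(h.*2, h))%:R * ((a + b) / 2) ^+ r) /\
  ((r <= 1)%N -> (Qp r (h.*2 - r))`_h = ('C(h.*2, h))%:R * ((a + b) / 2) ^+ r).
Proof.
move=> ha hb; elim: r => [|r IH] hr.
  by rewrite /Qp expr0 mul1r subn0 coef_Cn expr0 mulr1.
case: h hr IH => [|c] hr IH; first by [].
set s := (c.+1.*2 - r.+1)%N.
have hs : (r + s = c.*2.+1)%N by rewrite /s doubleS in hr *; lia.
have e1 : (c.+1.*2 - r = s.+1)%N by rewrite /s doubleS in hr *; lia.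
have [IH1 IH2] := IH (ltnW hr). rewrite e1 in IH1 IH2.
have E1 : Qp r s.+1 = Cpol * Qp r s by rewrite /Qp exprS mulrCA.
have E2 : Qp r.+1 s = Apol * Qp r s by rewrite /Qp exprS mulrA.
rewrite E2 coef_AM. rewrite E1 coef_CM in IH1 IH2.
have M := mono hs.
have Z0 : 0 <= (Apol ^+ r.-1 * Cpol ^+ s)`_c by exact: Qp_ge0.
set Z := (Apol ^+ r.-1 * Cpol ^+ s)`_c in M Z0.
set q0 := (Qp r s)`_c in IH1 IH2 M *.
set q1 := (Qp r s)`_c.+1 in IH1 IH2 M *.
set C := ('C(c.+1.*2, c.+1))%:R in IH1 IH2 *.
have key : 0 <= (a - b) * (q1 - q0).
  rewrite -(pmulrn_lge0 _ (ltn0Sn c)) -mulrnAr M mulrnAr.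
  apply: mulrn_wge0. rewrite mulrCA -expr2. apply: mulr_ge0 => //.
  exact: sqr_ge0.
have m0 : 0 <= (a + b) / 2 by apply: divr_ge0; [lra | lra].
have H1 := ler_wpM2r m0 IH1.
split.
  rewrite exprSr mulrA. nra.
move=> r0; have r00 : r = 0%N by lia.
move: M; rewrite r00 mulr0n => /eqP; rewrite mulrn_eq0 /= subr_eq0 => /eqP q10.
have e := IH2 (ltnW r0).
rewrite exprSr mulrA; rewrite r00 in e; rewrite -e q10; lra.
Qed.


Definition Psi k r :=
  (Qp r (k - r))`_(uphalf k) / 2%:R / ('C(k, uphalf k))%:R +
  (Qp r (k - r))`_(k./2) / 2%:R / ('C(k, k./2))%:R.

Lemma psi_bound k r : 0 <= a -> 0 <= b -> (r <= k)%N ->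
  (Psi k r <= ((a + b) / 2) ^+ r) /\ ((r <= 1)%N -> Psi k r = ((a + b) / 2) ^+ r).
Proof.
move=> ha hb hrk; rewrite /Psi.
have := odd_double_half k; set h := k./2; case: (odd k) => /= hk.
- have ek : k = h.*2.+1 by rewrite -hk.
  have eu : uphalf k = h.+1 by rewrite ek; exact: (half_double h.+1).
  rewrite eu.
  have eC : 'C(k, h.+1) = 'C(k, h).
    rewrite -bin_sub; last by rewrite ek -!addnn; lia.
    by congr 'C(_, _); rewrite ek -!addnn; lia.
  have Cpos : (0 : R) < ('C(k, h))%:R by rewrite ltr0n bin_gt0 ek -!addnn; lia.
  have hk2 : (r <= h.+1.*2)%N by rewrite ek -!addnn in hrk *; lia.
  have [B1 B2] := even_bound ha hb hk2.
  have eq1 : (h.+1.*2 - r = (k - r).+1)%N by rewrite ek -!addnn in hrk *; lia.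
  have eQ : Qp r (k - r).+1 = Cpol * Qp r (k - r) by rewrite /Qp exprS mulrCA.
  rewrite eq1 eQ coef_CM in B1 B2.
  have eC2 : 'C(h.+1.*2, h.+1) = ('C(k, h) * 2)%N.
    by rewrite doubleS binS -ek eC muln2 addnn.
  rewrite eC2 natrM in B1 B2.
  set T0 := (Qp r (k - r))`_h in B1 B2 *.
  set T1 := (Qp r (k - r))`_h.+1 in B1 B2 *.
  set C := ('C(k, h))%:R in Cpos B1 B2 *.
  rewrite eC -/C.
  have -> : T1 / 2%:R / C + T0 / 2%:R / C = (T0 + T1) / (C * 2%:R).
    by field; rewrite lt0r_neq0.
  have C2 : 0 < C * 2%:R by rewrite mulr_gt0.
  split; first by rewrite ler_pdivrMr // mulrC.
  by move=> r1; rewrite B2 // mulrAC divff ?mul1r // lt0r_neq0.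
- have ek : k = h.*2 by rewrite -hk.
  have eu : uphalf k = h by rewrite ek uphalf_double.
  rewrite eu.
  have hk2 : (r <= h.*2)%N by rewrite -ek.
  have [B1 B2] := even_bound ha hb hk2.
  rewrite -ek in B1 B2.
  set T0 := (Qp r (k - r))`_h in B1 B2 *.
  have Cpos : (0 : R) < ('C(k, h))%:R by rewrite ltr0n bin_gt0 ek -!addnn; lia.
  set C := ('C(k, h))%:R in Cpos B1 B2 *.
  have -> : T0 / 2%:R / C + T0 / 2%:R / C = T0 / C.
    by field; rewrite lt0r_neq0.
  split; first by rewrite ler_pdivrMr // mulrC.
  by move=> r1; rewrite B2 // mulrAC divff ?mul1r // lt0r_neq0.
Qed.

End Num.


Section Indep.
Variables (I J : finType) (R : comNzRingType).

Definition restr (Q : I -> pred J) (d : I -> J) (A : {set I}) : I -> pred J :=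
  fun i => [pred v | if i \in A then Q i v else v == d i].

Definition mix (A : {set I}) (f g : {ffun I -> J}) : {ffun I -> J} :=
  [ffun i => if i \in A then f i else g i].

Lemma eq_family (Q1 Q2 : I -> pred J) :
  (forall i v, Q1 i v = Q2 i v) -> family Q1 =i family Q2.
Proof.
move=> e f; apply/familyP/familyP => h i; have := h i; rewrite /in_mem /= e //.
Qed.

Lemma sum_split (Q : I -> pred J) (d : I -> J) (A : {set I})
  (F G : {ffun I -> J} -> R) :
  (forall f g : {ffun I -> J}, {in A, f =1 g} -> F f = F g) ->
  (forall f g : {ffun I -> J}, {in ~: A, f =1 g} -> G f = G g) ->
  \sum_(h in family Q) F h * G h =
  (\sum_(f in family (restr Q d A)) F f) *
  (\sum_(g in family (restr Q d (~: A))) G g).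
Proof.
move=> hF hG.
rewrite big_distrlr /= pair_big /=.
rewrite (reindex_onto (fun h => (mix A h (finfun d), mix A (finfun d) h))
                      (fun p => mix A p.1 p.2)) /=; last first.
  move=> [f g] /= /andP[/familyP hf /familyP hg].
  congr (_, _); apply/ffunP => i; rewrite !ffunE;
    case: (boolP (i \in A)) => iA; rewrite ?(negbTE iA) ?iA //.
    by have := hf i; rewrite /restr inE /= (negbTE iA) => /eqP ->.
  by have := hg i; rewrite /restr inE /= inE iA /= => /eqP ->.
apply: eq_big => [h|h].
  have -> : mix A (mix A h [ffun x => d x]) (mix A [ffun x => d x] h) == h.
    by apply/eqP/ffunP => i; rewrite !ffunE; case: (i \in A).
  rewrite andbT; apply/idP/andP.
    move/familyP => hh; split; apply/familyP => i; have := hh i;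
      rewrite /restr !inE !ffunE /= ?inE; case: (i \in A) => //= _; by rewrite ffunE.
  move=> [/familyP h1 /familyP h2]; apply/familyP => i; have := h1 i; have := h2 i;
  rewrite /restr !inE !ffunE /= ?inE; case: (i \in A) => //=.
move=> _; congr (_ * _).
  by apply: hF => i iA; rewrite ffunE iA.
by apply: hG => i; rewrite inE => /negbTE iA; rewrite ffunE iA.
Qed.

Lemma sum_prod_indep (K : finType) (Q : I -> pred J) (d : I -> J)
  (S : K -> {set I}) (H : K -> {ffun I -> J} -> R) (s : seq K) :
  uniq s ->
  (forall k k', k \in s -> k' \in s -> k != k' -> [disjoint S k & S k']) ->
  (forall k (f g : {ffun I -> J}), k \in s -> {in S k, f =1 g} -> H k f = H k g) ->
  \sum_(f in family (restr Q d (\bigcup_(k <- s) S k))) \prod_(k <- s) H k f =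
  \prod_(k <- s) \sum_(f in family (restr Q d (S k))) H k f.
Proof.
elim: s => [|k s IH] /=.
  move=> _ _ _.
  rewrite [in RHS]big_nil.
  rewrite (eq_bigr (fun _ => 1)); last by move=> f _; rewrite big_nil.
  rewrite (big_pred1 (finfun d)) // => f.
  rewrite inE; apply/familyP/eqP => [hf|->].
    apply/ffunP => i; have := hf i; rewrite !inE big_nil inE ffunE.
    by move/eqP.
  by move=> i; rewrite !inE big_nil inE ffunE.
move=> /andP[ks us] hdis hdep.
have inks : forall j, j \in s -> j \in k :: s by move=> j0 h; rewrite inE h orbT.
have hdis' : forall k1 k2, k1 \in s -> k2 \in s -> k1 != k2 -> [disjoint S k1 & S k2].
  by move=> k1 k2 h1 h2; apply: hdis; rewrite inE ?h1 ?h2 orbT.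
have hdep' : forall k1 (f g : {ffun I -> J}), k1 \in s -> {in S k1, f =1 g} -> H k1 f = H k1 g.
  by move=> k1 f g h1; apply: hdep; rewrite inE h1 orbT.
rewrite [RHS]big_cons -(IH us hdis' hdep').
under eq_bigr do rewrite big_cons.
rewrite (sum_split _ d (A := S k)).
- congr (_ * _); apply: eq_bigl => f; apply: eq_family => i v.
    rewrite /restr !inE big_cons in_setU.
    by case: ifP => // ->.
  rewrite /restr !inE big_cons in_setU.
  case: (boolP (i \in S k)) => ik /=.
    have -> // : i \in \bigcup_(j <- s) S j = false.
    apply/negbTE; rewrite bigcup_seq; apply/bigcupP => [[j js ij]].
    have kj : k != j by apply: contraNneq ks => ->.
    by rewrite (disjointFr (hdis _ _ (mem_head _ _) (inks _ js) kj) ik) in ij.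
  by [].
- by move=> f g; apply: hdep; exact: mem_head.
- move=> f g hfg; apply: eq_big_seq => j js; apply: hdep' => // i ij; apply: hfg.
  rewrite inE; apply/negP => ik.
  have kj : k != j by apply: contraNneq ks => ->.
  by rewrite (disjointFr (hdis _ _ (mem_head _ _) (inks _ js) kj) ik) in ij.
Qed.

End Indep.


Section Step.
Variables (R : realFieldType) (n m : nat) (mate : {ffun 'I_n -> 'I_n}).
Hypothesis hmate : forall u, mate (mate u) = u.
Variable w : config m n.

Definition Qw : 'I_m -> pred 'I_n :=
  fun i => [pred v | (v == w i) || (v == mate (w i))].
Definition Edges : {set 'I_n} := [set u : 'I_n | (u < mate u)%N].
Definition Sd (u : 'I_n) : {set 'I_m} := [set i | (w i == u) || (w i == mate u)].
Definition matched (i : 'I_m) := mate (w i) != w i.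
Definition rep (i : 'I_m) : 'I_n := if (w i < mate (w i))%N then w i else mate (w i).

Lemma mate_inj : injective mate.
Proof. by move=> x y e; rewrite -(hmate x) e hmate. Qed.

Lemma Edges_neq u : u \in Edges -> mate u != u.
Proof. by rewrite inE => h; apply/eqP => e; rewrite e ltnn in h. Qed.

Lemma Sd_disj u u' : u \in Edges -> u' \in Edges -> u != u' -> [disjoint Sd u & Sd u'].
Proof.
rewrite !inE => hu hu' neq; rewrite -setI_eq0; apply/eqP/setP => i.
rewrite !inE; apply/negP => /andP[h1 h2].
have : (u' == u) || (u' == mate u).
  case/orP: h1 => /eqP e1; case/orP: h2 => /eqP e2.
  - by rewrite -e2 e1 eqxx.
  - by rewrite -e1 e2 hmate eqxx orbT.
  - by rewrite -e2 e1 eqxx orbT.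
  - by apply/orP; left; apply/eqP; apply: mate_inj; rewrite -e1 -e2.
case/orP => /eqP e; first by rewrite e eqxx in neq.
by move: hu'; rewrite e hmate => h; have := ltn_trans hu h; rewrite ltnn.
Qed.

Lemma rep_Edges i : matched i -> rep i \in Edges.
Proof.
rewrite /matched /rep inE => hm; case: ifP => // h.
rewrite hmate; move: h; rewrite ltnNge => /negbFE.
by rewrite leq_eqVlt => /orP[/eqP /val_inj e|//]; rewrite e eqxx in hm.
Qed.

Lemma in_Sd_rep i u : u \in Edges -> (i \in Sd u) = matched i && (rep i == u).
Proof.
move=> hu; have hne := Edges_neq hu; move: hu; rewrite !inE /matched /rep => hu.
apply/idP/idP.
  case/orP => /eqP e; rewrite e.
    by rewrite hne hu /= eqxx.
  rewrite hmate eq_sym hne /=; case: ifP => [h|_]; last by rewrite eqxx.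
  by have := ltn_trans hu h; rewrite ltnn.
case/andP => hm; case: ifP => _ /eqP <-; first by rewrite eqxx.
by rewrite hmate eqxx orbT.
Qed.

Lemma prod_part (g : 'I_m -> R) (B : {set 'I_m}) :
  \prod_(i in B) g i =
  (\prod_(i in B | ~~ matched i) g i) * \prod_(u in Edges) \prod_(i in B | i \in Sd u) g i.
Proof.
rewrite (bigID matched) /= mulrC; congr (_ * _).
rewrite (partition_big rep (mem Edges)) /=; last by move=> i /andP[_]; exact: rep_Edges.
apply: eq_bigr => u hu; apply: eq_bigl => i.
by rewrite in_Sd_rep // andbA.
Qed.


Lemma sum_family (Phi : config m n -> R) :
  \sum_(f : config m n) step_prob R mate w f * Phi f =
  \sum_(f in family Qw) (\prod_(u in Edges) edge_prob R mate w f u) * Phi f.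
Proof.
rewrite [RHS]big_mkcond; apply: eq_bigr => f _; rewrite /step_prob.
have -> : [forall i, (f i == w i) || (f i == mate (w i))] = (f \in family Qw).
  by apply/forallP/familyP.
case: ifP => _; last by rewrite mul0r.
by congr (_ * _); apply: eq_bigl => u; rewrite inE.
Qed.

Lemma fam_unmatched f i : f \in family Qw -> ~~ matched i -> f i = w i.
Proof.
move=> /familyP /(_ i); rewrite /matched negbK => h /eqP e.
move: h; rewrite /Qw inE /= e orbb; exact/eqP.
Qed.


Variables (p : 'I_n -> R) (B : {set 'I_m}).

Definition Hf (u : 'I_n) (f : config m n) : R :=
  edge_prob R mate w f u * \prod_(i in B | i \in Sd u) p (f i).

Definition phi (u : 'I_n) (i : 'I_m) (x : 'I_n) : {poly R} :=
  if i \in Sd u then (if x == u then 'X else 1) * (if i \in B then p x else 1)%:P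
  else 1.

Lemma phi_prod u (f : config m n) :
  \prod_i phi u i (f i) =
  'X ^+ #|[set i in Sd u | f i == u]| * (\prod_(i in B | i \in Sd u) p (f i))%:P.
Proof.
rewrite /phi -big_mkcond /= big_split /=; congr (_ * _).
  rewrite -big_mkcondr /=.
  rewrite (eq_bigl (mem [set i in Sd u | f i == u])) ?prodr_const //.
  by move=> i; rewrite !inE.
rewrite -rmorph_prod; congr (_%:P).
rewrite -big_mkcondr /=; apply: eq_bigl => i; exact: andbC.
Qed.

Lemma coef_phi u (f : config m n) c :
  (#|[set i in Sd u | f i == u]| == c)%:R * \prod_(i in B | i \in Sd u) p (f i) =
  (\prod_i phi u i (f i))`_c.
Proof. by rewrite phi_prod coefMC coefXn eq_sym. Qed.


Lemma prod_key u : u \in Edges ->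
  \prod_i (\sum_(x | restr Qw w (Sd u) i x) phi u i x) =
  Qp (p u) (p (mate u)) #|Sd u :&: B| (#|Sd u| - #|Sd u :&: B|).
Proof.
move=> hu; have hne := Edges_neq hu.
rewrite (eq_bigr (fun i => if i \in Sd u then
     'X * (if i \in B then p u else 1)%:P + (if i \in B then p (mate u) else 1)%:P
     else 1)); last first.
  move=> i _; rewrite /restr /phi; case: ifP => iS /=.
    rewrite (eq_bigl (fun x => (x == u) || (x == mate u))); last first.
      move=> x; rewrite /Qw /=.
      move: iS; rewrite inE => /orP[] /eqP ->; first by [].
      by rewrite hmate orbC.
    rewrite (bigD1 u) ?eqxx //=; congr (_ + _).
    rewrite (eq_bigl (fun x => x == mate u)); last first.
      move=> x; case: (eqVneq x u) => [->|]; first by rewrite eq_sym (negbTE hne).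
      by rewrite orFb andbT.
    by rewrite big_pred1_eq (negbTE hne) mul1r.
  by rewrite (eq_bigl (fun x => x == w i)) ?big_pred1_eq // => x; rewrite inE.
rewrite -big_mkcond /= (bigID (fun i => i \in B)) /=.
rewrite /Qp /Apol /Cpol; congr (_ * _).
  rewrite (eq_bigl (mem (Sd u :&: B))); last by move=> i; rewrite !inE.
  rewrite (eq_bigr (fun _ => 'X * (p u)%:P + (p (mate u))%:P)) ?prodr_const //.
  by move=> i /setIP[_ ->].
rewrite (eq_bigl (mem (Sd u :\: B))); last by move=> i; rewrite !inE andbC.
rewrite (eq_bigr (fun _ => 'X + 1)) ?prodr_const; last first.
  by move=> i /setDP[_ /negbTE ->]; rewrite mulr1.
by rewrite -(cardsID B (Sd u)) addKn.
Qed.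


Lemma edge_sum u : u \in Edges ->
  \sum_(f in family (restr Qw w (Sd u))) Hf u f =
  Psi (p u) (p (mate u)) #|Sd u| #|Sd u :&: B|.
Proof.
move=> hu.
have e : forall x y z q : R, x / y / z * q = x * q / y / z.
  by move=> x y z q; rewrite mulrAC [x / y * q]mulrAC.
rewrite (eq_bigr (fun f : config m n =>
   (\prod_i phi u i (f i))`_(uphalf #|Sd u|) / 2%:R / ('C(#|Sd u|, uphalf #|Sd u|))%:R +
   (\prod_i phi u i (f i))`_(#|Sd u|./2) / 2%:R / ('C(#|Sd u|, #|Sd u|./2))%:R)); last first.
  by move=> f _; rewrite /Hf /edge_prob /= mulrDl !e -!coef_phi.
rewrite big_split /= -!mulr_suml -!coef_sum.
rewrite -!(bigA_distr_big_dep (restr Qw w (Sd u)) (phi u)).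
by rewrite prod_key.
Qed.


Definition Op (x : 'I_n) : R := \sum_y match_mx R mate x y * p y.

Lemma Op_val x : Op x = if mate x == x then p x else (p x + p (mate x)) / 2%:R.
Proof.
rewrite /Op; under eq_bigr do rewrite mxE.
case: ifP => hx.
  rewrite (bigD1 x) //= eqxx mul1r big1 ?addr0 // => y /negbTE.
  by rewrite eq_sym => ->; rewrite mul0r.
rewrite (bigD1 x) //= eqxx /= (bigD1 (mate x)) /=; last by rewrite hx.
rewrite eqxx orbT big1 ?addr0.
  by rewrite [RHS]mulrDl; congr (_ + _); exact: mulrC.
by move=> y /andP[hy1 hy2]; rewrite (negbTE hy1) (negbTE hy2) mul0r.
Qed.

Lemma Op_unm i : ~~ matched i -> Op (w i) = p (w i).
Proof. by rewrite /matched negbK Op_val => ->. Qed.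

Lemma Op_Sd u i : u \in Edges -> i \in Sd u -> Op (w i) = (p u + p (mate u)) / 2%:R.
Proof.
move=> hu; have hne := Edges_neq hu; rewrite inE Op_val => /orP[] /eqP ->.
  by rewrite (negbTE hne).
rewrite hmate; case: ifP => [/eqP e|_]; first by rewrite -{1}e eqxx in hne.
by rewrite addrC.
Qed.

Lemma Hf_dep u (f g : config m n) : {in Sd u, f =1 g} -> Hf u f = Hf u g.
Proof.
move=> hfg; rewrite /Hf.
have -> : \prod_(i in B | i \in Sd u) p (f i) = \prod_(i in B | i \in Sd u) p (g i).
  by apply: eq_bigr => i /andP[_ h]; rewrite hfg.
congr (_ * _); rewrite /edge_prob /=.
have E1 : [set i in Sd u | f i == u] = [set i in Sd u | g i == u].
  by apply/setP => i; rewrite !inE; case h: ((w i == u) || (w i == mate u)) => //=; rewrite hfg // inE h.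
by rewrite /Sd in E1; rewrite E1.
Qed.

Lemma fam_eq : family Qw =i family (restr Qw w (\bigcup_(k <- enum Edges) Sd k)).
Proof.
apply: eq_family => i v; rewrite /restr inE /=.
case: ifP => // hi; rewrite /Qw /=.
have hm : ~~ matched i.
  apply/negP => hm; move/negP: hi; apply; rewrite bigcup_seq.
  apply/bigcupP; exists (rep i); first by rewrite mem_enum rep_Edges.
  by rewrite in_Sd_rep ?rep_Edges // hm eqxx.
by move: hm; rewrite /matched negbK => /eqP ->; rewrite orbb.
Qed.

Lemma step_main :
  \sum_(f : config m n) step_prob R mate w f * \prod_(i in B) p (f i) =
  (\prod_(i in B | ~~ matched i) p (w i)) *
  \prod_(u in Edges) Psi (p u) (p (mate u)) #|Sd u| #|Sd u :&: B|.
Proof.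
rewrite sum_family.
rewrite (eq_bigr (fun f => (\prod_(i in B | ~~ matched i) p (w i)) *
                           \prod_(u <- enum Edges) Hf u f)); last first.
  move=> f hf; rewrite (prod_part (fun i => p (f i))).
  rewrite (eq_bigr (fun i => p (w i)) (P := fun i => (i \in B) && ~~ matched i)); last first.
    by move=> i /andP[_ h]; rewrite (fam_unmatched hf h).
  rewrite mulrCA; congr (_ * _).
  by rewrite big_enum /= /Hf big_split.
rewrite -big_distrr /=; congr (_ * _).
rewrite (eq_bigl _ _ fam_eq).
rewrite sum_prod_indep ?enum_uniq //.
- rewrite big_enum /=; apply: eq_bigr => u hu; exact: edge_sum.
- by move=> k k'; rewrite !mem_enum; exact: Sd_disj.
- by move=> k f g _; exact: Hf_dep.
Qed.

Lemma op_main :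
  \prod_(i in B) Op (w i) =
  (\prod_(i in B | ~~ matched i) p (w i)) *
  \prod_(u in Edges) ((p u + p (mate u)) / 2%:R) ^+ #|Sd u :&: B|.
Proof.
rewrite (prod_part (fun i => Op (w i))); congr (_ * _).
  by apply: eq_bigr => i /andP[_ h]; rewrite Op_unm.
apply: eq_bigr => u hu.
rewrite (eq_bigl (mem (Sd u :&: B))); last by move=> i; rewrite !inE andbC.
rewrite (eq_bigr (fun _ => (p u + p (mate u)) / 2%:R)) ?prodr_const //.
by move=> i /setIP[h _]; rewrite (Op_Sd hu h).
Qed.

End Step.


Lemma Psi_ge0 (R : realFieldType) (a b : R) k r : 0 <= a -> 0 <= b -> 0 <= Psi a b k r.
Proof.
move=> ha hb; rewrite /Psi.
by apply: addr_ge0; apply: divr_ge0; rewrite ?ler0n //; apply: divr_ge0;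
  rewrite ?ler0n // Qp_ge0.
Qed.

Lemma step_bound (R : realFieldType) (n m : nat) (mate : {ffun 'I_n -> 'I_n})
  (hmate : forall u, mate (mate u) = u) (w : config m n) (p : 'I_n -> R)
  (B : {set 'I_m}) : (forall x, 0 <= p x) ->
  (\sum_(f : config m n) step_prob R mate w f * \prod_(i in B) p (f i)
     <= \prod_(i in B) Op mate p (w i)) /\
  ((#|B| <= 1)%N -> \sum_(f : config m n) step_prob R mate w f * \prod_(i in B) p (f i)
     = \prod_(i in B) Op mate p (w i)).
Proof.
move=> p0; rewrite step_main // op_main //.
have C0 : 0 <= \prod_(i in B | ~~ matched mate w i) p (w i) by apply: prodr_ge0.
split.
  apply: ler_wpM2l => //; apply: ler_prod => u hu.
  rewrite Psi_ge0 //=.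
  have [h _] := psi_bound (p0 u) (p0 (mate u)) (subset_leq_card (subsetIl (Sd mate w u) B)).
  by [].
move=> hB; congr (_ * _); apply: eq_bigr => u hu.
have [_ h] := psi_bound (p0 u) (p0 (mate u)) (subset_leq_card (subsetIl (Sd mate w u) B)).
by apply: h; apply: leq_trans hB; apply: subset_leq_card; apply: subsetIr.
Qed.

Definition app (R : realFieldType) (n : nat) (A : 'M[R]_n) (p : 'I_n -> R) : 'I_n -> R :=
  fun x => \sum_y A x y * p y.

Lemma app_mul (R : realFieldType) (n : nat) (A C : 'M[R]_n) p x :
  app (A *m C) p x = app A (app C p) x.
Proof.
rewrite /app; under eq_bigr do rewrite mxE big_distrl /=.
rewrite exchange_big /=; apply: eq_bigr => j _; rewrite big_distrr /=.
by apply: eq_bigr => y _; rewrite mulrA.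
Qed.

Lemma app1 (R : realFieldType) (n : nat) p (x : 'I_n) : app (1%:M : 'M[R]_n) p x = p x.
Proof.
rewrite /app (bigD1 x) //= mxE eqxx mul1r big1 ?addr0 // => y /negbTE h.
by rewrite mxE eq_sym h mul0r.
Qed.

Lemma big_mulmx_recr (R : realFieldType) (n : nat) (F : nat -> 'M[R]_n) a d :
  \big[mulmx/1%:M]_(a <= s < (a + d).+1) F s =
  \big[mulmx/1%:M]_(a <= s < a + d) F s *m F (a + d)%N.
Proof.
elim: d a => [|d IH] a.
  rewrite addn0. rewrite big_ltn //.
  rewrite [X in _ *m X = _]big_geq // [X in _ = X *m _]big_geq //.
  by rewrite mulmx1 mul1mx ?addn0.
rewrite big_ltn ?ltnS ?leq_addr // addnS -addSn IH.
rewrite [in RHS]big_ltn; last by rewrite addSn ltnS leq_addr.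
by rewrite mulmxA.
Qed.

Lemma match_prod_recr (R : realFieldType) (n : nat) (Ms : nat -> {ffun 'I_n -> 'I_n}) a k :
  match_prod R Ms a.+1 (a + k)%N.+1 = match_prod R Ms a.+1 (a + k)%N *m match_mx R (Ms (a + k)%N.+1).
Proof.
rewrite /match_prod -addSn big_mulmx_recr.
by rewrite addSn.
Qed.

Lemma match_prod_nil (R : realFieldType) (n : nat) (Ms : nat -> {ffun 'I_n -> 'I_n}) a :
  match_prod R Ms a.+1 a = 1%:M.
Proof. by rewrite /match_prod big_geq. Qed.

Lemma step_ge0 (R : realFieldType) (n m : nat) (mate : {ffun 'I_n -> 'I_n}) (w f : config m n) :
  0 <= step_prob R mate w f.
Proof.
rewrite /step_prob; case: ifP => // _; apply: prodr_ge0 => u _.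
rewrite /edge_prob /=; apply: addr_ge0; rewrite !divr_ge0 ?ler0n //.
Qed.

Lemma proc_ge0 (R : realFieldType) (n m : nat) (Ms : nat -> {ffun 'I_n -> 'I_n}) t1 k
  (w0 w : config m n) : 0 <= proc_dist R Ms t1 k w0 w.
Proof.
elim: k w => [|k IH] w /=; rewrite ffunE ?ler0n //.
by apply: sumr_ge0 => v _; rewrite mulr_ge0 ?step_ge0.
Qed.

Lemma match_mx_ge0 (R : realFieldType) (n : nat) (mate : {ffun 'I_n -> 'I_n}) x y :
  0 <= match_mx R mate x y.
Proof. by rewrite mxE; case: ifP => _; rewrite ?ler0n //; case: ifP => _; rewrite ?invr_ge0 ?ler0n. Qed.

Lemma app_ge0 (R : realFieldType) (n : nat) (mate : {ffun 'I_n -> 'I_n}) (p : 'I_n -> R) :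
  (forall x, 0 <= p x) -> forall x, 0 <= app (match_mx R mate) p x.
Proof.
by move=> p0 x; apply: sumr_ge0 => y _; rewrite mulr_ge0 ?match_mx_ge0.
Qed.

Lemma round (R : realFieldType) (n m : nat) (G : rel 'I_n) (Ms : nat -> {ffun 'I_n -> 'I_n})
  (hM : forall t, is_matching G (Ms t)) (t1 : nat) (w0 : config m n) k :
  forall (B : {set 'I_m}) (p : 'I_n -> R), (forall x, 0 <= p x) ->
  (\sum_(w : config m n) proc_dist R Ms t1 k w0 w * \prod_(i in B) p (w i)
     <= \prod_(i in B) app (match_prod R Ms t1.+1 (t1 + k)%N) p (w0 i)) /\
  ((#|B| <= 1)%N ->
   \sum_(w : config m n) proc_dist R Ms t1 k w0 w * \prod_(i in B) p (w i)
     = \prod_(i in B) app (match_prod R Ms t1.+1 (t1 + k)%N) p (w0 i)).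
Proof.
elim: k => [|k IH] B p p0.
  have -> : \sum_(w : config m n) proc_dist R Ms t1 0 w0 w * \prod_(i in B) p (w i)
          = \prod_(i in B) p (w0 i).
    rewrite (bigD1 w0) //= ffunE eqxx mul1r [X in _ + X]big1 ?addr0 // => w /negbTE h.
    by rewrite ffunE h mul0r.
  rewrite addn0 match_prod_nil.
  have -> : \prod_(i in B) app 1%:M p (w0 i) = \prod_(i in B) p (w0 i).
    by apply: eq_bigr => i _; rewrite app1.
  by split.
have hmate : forall u, Ms (t1 + k.+1)%N (Ms (t1 + k.+1)%N u) = u.
  by move=> u; have [] := hM (t1 + k.+1)%N u.
set Op' := Op (Ms (t1 + k.+1)%N) p.
have e1 : \sum_(w : config m n) proc_dist R Ms t1 k.+1 w0 w * \prod_(i in B) p (w i) =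
  \sum_(w : config m n) proc_dist R Ms t1 k w0 w *
     (\sum_(f : config m n) step_prob R (Ms (t1 + k.+1)%N) w f * \prod_(i in B) p (f i)).
  rewrite /=; under eq_bigr do rewrite ffunE big_distrl /=.
  rewrite exchange_big /=; apply: eq_bigr => w _; rewrite big_distrr /=.
  by apply: eq_bigr => f _; rewrite mulrA.
have e2 : \prod_(i in B) app (match_prod R Ms t1.+1 (t1 + k.+1)%N) p (w0 i) =
          \prod_(i in B) app (match_prod R Ms t1.+1 (t1 + k)%N) Op' (w0 i).
  rewrite addnS match_prod_recr; apply: eq_bigr => i _; rewrite app_mul.
  by rewrite /Op' /Op /app addnS.
have Op0 : forall x, 0 <= Op' x by exact: (app_ge0 (Ms (t1 + k.+1)%N) p0).
have [IH1 IH2] := IH B Op' Op0.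
rewrite e1 e2; split.
  apply: le_trans IH1; apply: ler_sum => w _; apply: ler_wpM2l; first exact: proc_ge0.
  by have [] := step_bound hmate w B p0.
move=> hB; rewrite -(IH2 hB); apply: eq_bigr => w _; congr (_ * _).
by have [_ ->] := step_bound hmate w B p0.
Qed.

Unset Implicit Arguments.

Theorem lemma3p2 (R : realFieldType) (n m : nat) (G : rel 'I_n)
  (Ms : nat -> {ffun 'I_n -> 'I_n})
  (hG : is_graph G) (hM : forall t, is_matching G (Ms t))
  (w0 : config m n) (B : {set 'I_m}) (D : {set 'I_n}) (t1 t2 : nat)
  (ht : (t1 < t2)%N) :
  Pr_at R Ms t1 t2 w0 (fun w => [forall i in B, w i \in D])
    <= \prod_(i in B) mx_row_set (match_prod R Ms t1.+1 t2) (w0 i) D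
  /\ \prod_(i in B) mx_row_set (match_prod R Ms t1.+1 t2) (w0 i) D
     = \prod_(i in B) Pr_at R Ms t1 t2 w0 (fun w => w i \in D).
Proof.
have et2 : t2 = (t1 + (t2 - t1))%N by rewrite subnKC // ltnW.
pose p := fun v : 'I_n => ((v \in D)%:R : R).
have p0 : forall x, 0 <= p x by move=> x; rewrite /p ler0n.
have mxE' : forall u, mx_row_set (match_prod R Ms t1.+1 t2) u D =
                      app (match_prod R Ms t1.+1 (t1 + (t2 - t1))%N) p u.
  move=> u; rewrite /mx_row_set /app -et2 big_mkcond /=; apply: eq_bigr => v _.
  by rewrite /p; case: (v \in D); rewrite ?mulr1 ?mulr0.
have PrE : forall (E : pred (config m n)), Pr_at R Ms t1 t2 w0 E =
    \sum_(w : config m n) proc_dist R Ms t1 (t2 - t1) w0 w * (E w)%:R.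
  move=> E; rewrite /Pr_at big_mkcond; apply: eq_bigr => w _.
  by case: (E w); rewrite ?mulr1 ?mulr0.
have indE : forall w : config m n,
    ([forall i in B, w i \in D])%:R = \prod_(i in B) p (w i) :> R.
  move=> w; case: (boolP [forall i in B, w i \in D]) => h.
    by rewrite big1 // => i iB; move/forall_inP: h => h; rewrite /p h.
  move/forall_inPn: h => [i iB hi].
  by rewrite (bigD1 i) //= /p (negbTE hi) mul0r.
split.
  rewrite PrE (eq_bigr (fun w => proc_dist R Ms t1 (t2 - t1) w0 w * \prod_(i in B) p (w i)));
    last by move=> w _; rewrite -indE.
  rewrite (eq_bigr (fun i => app (match_prod R Ms t1.+1 (t1 + (t2 - t1))%N) p (w0 i)));
    last by move=> i _; rewrite mxE'.
  by have [] := round hM t1 w0 (t2 - t1) B p0.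
apply: eq_bigr => i _; rewrite PrE mxE'.
have [_ h] := round hM t1 w0 (t2 - t1) [set i] p0.
rewrite big_set1 in h; rewrite -h ?cards1 //.
by apply: eq_bigr => w _; rewrite big_set1.
Qed.
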